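(* Let $\sigma_N$ be a preference profile of $n$ metrics over $m$ alternatives, let $\epsilon\ge0$, and let $K\subseteq N$ be a nonempty subset satisfying $\epsilon$-positional proportionality. Then for every score vector $s$ and every alternative $a\in A$, $$\left|f_s(a,\sigma_N)-f_s(a,\sigma_K)\right|\le\epsilon.$$
   Context: Let $N=[n]$ be a set of metrics and $A=[m]$ a set of alternatives. Each metric $i\in N$ has a ranking $\sigma_i$ of $A$; $\sigma_i(a)$ is the position of $a$ (1 is best). For $K\subseteq N$ write $\sigma_K=\{\sigma_i:i\in K\}$. For $K\subseteq N$, $r\in[m]$, $a\in A$, let $C(K,r,a)=|\{i\in K:\sigma_i(a)\le r\}|$. A nonempty $K\subseteq N$ satisfies $\epsilon$-positional proportionality if for all $a\in A$ and $r\in[m]$, $\left|\frac{C(N,r,a)}{|N|}-\frac{C(K,r,a)}{|K|}\right|\le\epsilon$. A scoring rule is given by a score vector $s\in\mathbb{R}^m$ with $s_1\ge s_2\ge\dots\ge s_m$, normalized so that $s_1=1$ and $s_m=0$. For a nonempty $K\subseteq N$, the average score of $a$ is $f_s(a,\sigma_K)=\frac{1}{|K|}\sum_{i\in K}s_{\sigma_i(a)}$. *)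

(* Defs.v *)
From mathcomp Require Import all_boot all_order all_algebra all_fingroup.
Set Implicit Arguments. Unset Strict Implicit. Unset Printing Implicit Defensive.
Import Order.TTheory GRing.Theory Num.Theory.
Local Open Scope ring_scope.

(* A profile: metric i : 'I_n ranks alternatives 'I_m by a bijection
   sigma i : {perm 'I_m}; the 1-based position of a is (sigma i a).+1. *)
Definition profile (n m : nat) := 'I_n -> {perm 'I_m}.

Definition pos n m (sigma : profile n m) (i : 'I_n) (a : 'I_m) : nat :=
  (sigma i a).+1.

Definition Ccount n m (sigma : profile n m) (K : {set 'I_n}) (r : nat) (a : 'I_m) : nat :=
  #|[set i in K | (pos sigma i a <= r)%N]|.

Definition pos_prop (R : realFieldType) n m (sigma : profile n m)
    (eps : R) (K : {set 'I_n}) : Prop :=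
  K != set0 /\
  forall (a : 'I_m) (r : nat), (1 <= r <= m)%N ->
    `| (Ccount sigma [set: 'I_n] r a)%:R / #|[set: 'I_n]|%:R
       - (Ccount sigma K r a)%:R / #|K|%:R | <= eps.

(* Score vector s_1 >= ... >= s_m with s_1 = 1, s_m = 0, indexed by
   1-based positions (values outside 1..m irrelevant). *)
Definition score_vector (R : realFieldType) (m : nat) (s : nat -> R) : Prop :=
  (forall j k, (1 <= j)%N -> (j <= k)%N -> (k <= m)%N -> s k <= s j) /\
  s 1%N = 1 /\ s m = 0.

Definition avg_score (R : realFieldType) n m (s : nat -> R) (sigma : profile n m)
    (K : {set 'I_n}) (a : 'I_m) : R :=
  (#|K|%:R)^-1 * \sum_(i in K) s (pos sigma i a).

(* Main.v *)
Require Import Defs.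
From mathcomp Require Import all_boot all_order all_algebra all_fingroup.
Import Order.TTheory GRing.Theory Num.Theory.
Local Open Scope ring_scope.

Lemma abel_s (R : realFieldType) (m : nat) (s : nat -> R) (p : nat) :
  s m = 0 -> (1 <= p <= m)%N ->
  s p = \sum_(1 <= r < m) (if (p <= r)%N then s r - s r.+1 else 0).
Proof.
move=> sm /andP[p1 pm].
rewrite (@big_cat_nat _ _ _ p 1 m) //= big1_seq ?add0r; last first.
  by move=> r /andP[_]; rewrite mem_iota subnKC // => /andP[_ rp]; rewrite leqNgt rp.
rewrite big_nat_cond.
rewrite (eq_bigr (fun r => s r - s r.+1)); last first.
  by move=> r /andP[/andP[-> _] _].
rewrite -big_nat_cond.
rewrite (telescope_sumr_eq (fun k => - s k)) // ?sm ?opprK ?oppr0 ?add0r //.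
by move=> k _; rewrite opprK addrC.
Qed.

Lemma sum_cnt (R : realFieldType) n (K : {set 'I_n}) (P : pred 'I_n) (c : R) :
  \sum_(i in K) (if P i then c else 0) = c * #|[set i in K | P i]|%:R.
Proof.
rewrite -big_mkcondr /= mulr_natr -sumr_const.
by apply: eq_bigl => i; rewrite inE.
Qed.

Lemma avg_expand (R : realFieldType) n m (s : nat -> R) (sigma : profile n m)
    (K : {set 'I_n}) (a : 'I_m) :
  s m = 0 ->
  avg_score s sigma K a =
  \sum_(1 <= r < m) (s r - s r.+1) * ((Ccount sigma K r a)%:R / #|K|%:R).
Proof.
move=> sm; rewrite /avg_score.
rewrite (eq_bigr (fun i => \sum_(1 <= r < m)
   (if (pos sigma i a <= r)%N then s r - s r.+1 else 0))); last first.
  move=> i _; apply: abel_s => //; rewrite /pos ltn0Sn /=; exact: ltn_ord.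
rewrite exchange_big mulr_sumr; apply: eq_bigr => r _.
rewrite sum_cnt /Ccount mulrCA; congr (_ * _).
by rewrite mulrC.
Qed.

Theorem theorem5 (R : realFieldType) (n m : nat) (sigma : profile n m)
    (eps : R) (K : {set 'I_n}) :
  0 <= eps ->
  pos_prop sigma eps K ->
  forall (s : nat -> R), score_vector m s ->
  forall a : 'I_m,
    `| avg_score s sigma [set: 'I_n] a - avg_score s sigma K a | <= eps.
Proof.
move=> eps0 [_ Hp] s [mono [s1 sm]] a.
have m1 : (0 < m)%N := leq_ltn_trans (leq0n a) (ltn_ord a).
rewrite !avg_expand // -sumrB.
apply: le_trans (ler_norm_sum _ _ _) _.
apply: (@le_trans _ _ (\sum_(1 <= r < m) (s r - s r.+1) * eps)).
  rewrite big_nat_cond [X in _ <= X]big_nat_cond.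
  apply: ler_sum => r /andP[/andP[r1 rm] _].
  have d0 : 0 <= s r - s r.+1 by rewrite subr_ge0; apply: mono => //.
  rewrite -mulrBr normrM ger0_norm //; apply: ler_wpM2l => //.
  apply: Hp; rewrite r1 /=; exact: ltnW.
rewrite -mulr_suml (telescope_sumr_eq (fun k => - s k)) //.
  by rewrite sm s1 oppr0 opprK add0r mul1r.
by move=> k _; rewrite opprK addrC.
Qed.
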